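(* Let $\pi$ be a propositional formula and $\varphi$ an arbitrary formula. Then (1) the formula $\lnot\Box\pi\to(\varphi\leftrightarrow[\dagger'\pi]\varphi)$ is valid (true at every world of every model); but (2) the formula $\lnot\Box\pi\to(\varphi\leftrightarrow[\dagger\pi]\varphi)$ is not necessarily valid, i.e. there exist a propositional $\pi$ and a formula $\varphi$ for which it is not valid.
   Context: Fix a countable non-empty set $\mathit{At}$ of atoms. Formulas are built from $\top$, atoms, $\lnot$, $\land$, $\Box$ and, for each propositional $\pi$, operators $[\dagger\pi]$ and $[\dagger'\pi]$. A model is $\mathcal{M}=\langle W,R,V\rangle$, $W\neq\varnothing$, $R\subseteq W\times W$ arbitrary, $V:\mathit{At}\to\mathcal{P}(W)$, with standard Kripke semantics for $\Box$. A literal is an atom or its negation; a clause is a finite set $D$ of literals read as $\bigvee D$ ($\bigvee\varnothing:=\bot$), tautological if it contains $p$ and $\lnot p$ for some $p$. For propositional $\pi$, $\mathcal{C}(\pi)$ is the set of non-tautological clauses $D$ with $\models\pi\to\bigvee D$ and no $D'\subsetneq D$ with $\models\pi\to\bigvee D'$. For a model $\mathcal{M}$ and a non-tautological clause $D$, $\mathcal{M}^{(D)}_u=\langle W',R',V'\rangle$ has $W'=W\times\{0,1\}$, $(w,i)R'(v,j)$ iff $wRv$, $(w,0)\in V'(p)$ iff $w\in V(p)$, and $(w,1)\in V'(p)$ iff $\lnot p\in D$, or $\{p,\lnot p\}\cap D=\varnothing$ and $w\in V(p)$. Semantics: $\mathcal{M},w\models[\dagger\pi]\varphi$ iff for all $D\in\mathcal{C}(\pi)$,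 $\mathcal{M}^{(D)}_u,(w,0)\models\varphi$. Conditional forgetting: $\mathcal{M},w\models[\dagger'\pi]\varphi$ iff either $\mathcal{M},w\models\Box\pi$ and for all $D\in\mathcal{C}(\pi)$, $\mathcal{M}^{(D)}_u,(w,0)\models\varphi$; or $\mathcal{M},w\not\models\Box\pi$ and $\mathcal{M},w\models\varphi$. *)

(* Defs.v *)
From Stdlib Require Import List.
Import ListNotations.
Set Implicit Arguments.

Section Syntax.
Variable At : Type.

Inductive pform : Type :=
| PTop : pform
| PAtom : At -> pform
| PNot : pform -> pform
| PAnd : pform -> pform -> pform.

Inductive form : Type :=
| FTop : form
| FAtom : At -> form
| FNot : form -> form
| FAnd : form -> form -> form
| FBox : form -> form
| FDag : pform -> form -> form
| FDagC : pform -> form -> form.      (* [†' π] φ  (conditional forgetting) *)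

Fixpoint emb (p : pform) : form :=
  match p with
  | PTop => FTop
  | PAtom a => FAtom a
  | PNot q => FNot (emb q)
  | PAnd q r => FAnd (emb q) (emb r)
  end.

Definition FImp (f g : form) : form := FNot (FAnd f (FNot g)).
Definition FIff (f g : form) : form := FAnd (FImp f g) (FImp g f).

(* Literals and clauses (a clause is a finite set of literals, here a list,
   read as a disjunction; the empty clause is bottom). *)
Inductive lit : Type := Pos : At -> lit | Neg : At -> lit.
Definition clause := list lit.

Definition lit_sat (v : At -> Prop) (l : lit) : Prop :=
  match l with Pos p => v p | Neg p => ~ v p end.
Definition clause_sat (v : At -> Prop) (D : clause) : Prop :=
  exists l, In l D /\ lit_sat v l.

Fixpoint psat (v : At -> Prop) (p : pform) : Prop :=
  match p with
  | PTop => True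
  | PAtom a => v a
  | PNot q => ~ psat v q
  | PAnd q r => psat v q /\ psat v r
  end.

Definition tautological (D : clause) : Prop :=
  exists p, In (Pos p) D /\ In (Neg p) D.

Definition entails_clause (pi : pform) (D : clause) : Prop :=
  forall v : At -> Prop, psat v pi -> clause_sat v D.

Definition proper_subclause (D' D : clause) : Prop :=
  (forall l, In l D' -> In l D) /\ ~ (forall l, In l D -> In l D').

Definition in_C (pi : pform) (D : clause) : Prop :=
  ~ tautological D /\ entails_clause pi D /\
  ~ (exists D', proper_subclause D' D /\ entails_clause pi D').

Record model : Type := Model {
  W : Type;
  W_ne : inhabited W;
  R : W -> W -> Prop;
  V : At -> W -> Prop
}.

Lemma upd_ne (M : model) : inhabited (W M * bool).
Proof. destruct (W_ne M) as [w]. exact (inhabits (w, false)). Qed.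

Definition upd (M : model) (D : clause) : model :=
  @Model (W M * bool) (upd_ne M)
    (fun x y => R M (fst x) (fst y))
    (fun p x => if snd x
                then In (Neg p) D \/
                     (~ In (Pos p) D /\ ~ In (Neg p) D /\ V M p (fst x))
                else V M p (fst x)).

Definition box_prop (M : model) (w : W M) (pi : pform) : Prop :=
  forall u, R M w u -> psat (fun a => V M a u) pi.

Fixpoint sat (f : form) (M : model) (w : W M) {struct f} : Prop :=
  match f with
  | FTop => True
  | FAtom a => V M a w
  | FNot g => ~ sat g M w
  | FAnd g h => sat g M w /\ sat h M w
  | FBox g => forall u, R M w u -> sat g M u
  | FDag pi g => forall D, in_C pi D -> sat g (upd M D) (w, false)
  | FDagC pi g =>
      (box_prop M w pi /\
         (forall D, in_C pi D -> sat g (upd M D) (w, false)))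
      \/ (~ box_prop M w pi /\ sat g M w)
  end.

Definition valid (f : form) : Prop :=
  forall (M : model) (w : W M), sat f M w.

End Syntax.

Definition countable (T : Type) : Prop :=
  exists f : T -> nat, forall x y, f x = f y -> x = y.

(* Main.v *)
Require Import Defs.
From Stdlib Require Import List Lia.
Import ListNotations.

Lemma emb_sat (At : Type) (p : pform At) (M : model At) (u : W M) :
  sat (emb p) M u <-> psat (fun a => V M a u) p.
Proof.
  induction p; simpl; try tauto.
Qed.

Definition M2 (At : Type) : model At :=
  @Model At nat (inhabits 0)
    (fun x y => (x = 0 /\ (y = 1 \/ y = 2)) \/ (x = 1 /\ y = 1))
    (fun _ x => x = 1).

Theorem proposition6 (At : Type) (At_countable : countable At)
  (At_nonempty : inhabited At) :
  (forall (pi : pform At) (phi : form At),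
      valid (FImp (FNot (FBox (emb pi))) (FIff phi (FDagC pi phi)))) /\
  (exists (pi : pform At) (phi : form At),
      ~ valid (FImp (FNot (FBox (emb pi))) (FIff phi (FDag pi phi)))).
Proof.
  split.
  - intros pi phi M w. simpl. intros [Hnb Hiff].
    assert (Hnbp : ~ box_prop M w pi).
    { intro Hb. apply Hnb. intros u Hu. apply emb_sat. apply Hb; auto. }
    apply Hiff. split.
    + intros [H1 H2]. apply H2. right. auto.
    + intros [[[Hb _] | [_ H]] H2]; auto.
  - destruct At_nonempty as [a].
    exists (PAtom a),
      (FBox (FNot (FAnd (FNot (FAtom a)) (FNot (FBox (FNot (FTop At))))))).
    intro Hv. specialize (Hv (M2 At) 0). simpl in Hv. apply Hv. split.
    + intro H. specialize (H 2 (or_introl (conj eq_refl (or_intror eq_refl)))).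
      discriminate.
    + intros [H1 H2]. apply H1. split.
      * intros u Hu [Hna Hnb]. destruct Hu as [[_ [-> | ->]] | [? _]]; try discriminate.
        -- apply Hna; reflexivity.
        -- apply Hnb. intros u' [[? _] | [? _]]; discriminate.
      * intro Hd.
        assert (HC : in_C (PAtom a) [Pos a]).
        { split; [|split].
          - intros [p [_ Hn]]. destruct Hn as [Hn | []]; discriminate.
          - intros v Hv'. exists (Pos a). simpl. auto.
          - intros [D' [[Hsub Hnot] Hent]].
            destruct (Hent (fun _ => True) I) as [l [Hl _]].
            apply Hnot. intros l' Hl'. destruct Hl' as [<- | []].
            destruct (Hsub l Hl) as [-> | []]. exact Hl. }
        specialize (Hd _ HC (1, true)). simpl in Hd.
        apply Hd. { left. split; auto. }
        split.
        -- intros [[Hn | []] | [Hn _]]; [discriminate | apply Hn; auto].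
        -- intro Hb. apply (Hb (1, false)). simpl. right; auto. exact I.
Qed.
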